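(* Let $\mathbf V$ be a monoid variety and let $f:\Sigma^\ast\to\Sigma^\ast$ be a rational partial function such that $\mathrm{dom}(f)$ is a $\mathbf V$-language. Then $f$ is definable by an unambiguous $\mathbf V$-NFT if and only if its completion $\bar f$ is definable by an unambiguous $\mathbf V$-NFT.
   Context: The completion of $f$ is the total function $\bar f:\Sigma^\ast\to(\Sigma\uplus\{\bot\})^\ast$ with $\bar f(u)=f(u)$ if $u\in\mathrm{dom}(f)$ and $\bar f(u)=\bot$ otherwise ($\bot$ a fresh output letter). A (real-time) NFT is $T=(Q,I,F,\Delta,i,t)$ with partial $\Delta:Q\times\Sigma\times Q\to\Gamma^\ast$, $i:I\to\Gamma^\ast$, $t:F\to\Gamma^\ast$ ($\Gamma$ an output alphabet), relating $u$ to $i(q_0)wt(q_f)$ for each successful run $q_0\xrightarrow{u\mid w}q_f$; rational functions are those defined by NFTs. It is unambiguous if its underlying automaton (outputs forgotten) has at most one successful run on each word. The transition monoid of an automaton with states $Q$ is $\Sigma^\ast/\equiv$ where $u\equiv v$ iff for all $p,q$ there is a run $p\to q$ on $u$ iff on $v$; a $\mathbf V$-automaton ($\mathbf V$-NFT) is one whose (underlying automaton's) transition monoid is in $\mathbf V$; a $\mathbf V$-language is a language recognized by a $\mathbf V$-automaton. *)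

(* Defs.v *)
From mathcomp Require Import all_boot.
Set Implicit Arguments. Unset Strict Implicit. Unset Printing Implicit Defensive.

Record finMonoid := FinMonoid {
  mcar :> finType;
  mmul : mcar -> mcar -> mcar;
  mone : mcar;
  mmulA : forall x y z, mmul x (mmul y z) = mmul (mmul x y) z;
  mmul1l : forall x, mmul mone x = x;
  mmul1r : forall x, mmul x mone = x }.

Definition is_hom (M N : finMonoid) (f : M -> N) : Prop :=
  f (mone M) = mone N /\ forall x y, f (mmul x y) = mmul (f x) (f y).

Definition prodM (M N : finMonoid) : finMonoid.
Proof.
refine (@FinMonoid (M * N)%type
  (fun x y => (mmul x.1 y.1, mmul x.2 y.2)) (mone M, mone N) _ _ _).
- by move=> [a b] [c d] [e g] /=; rewrite !mmulA.
- by move=> [a b] /=; rewrite !mmul1l.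
- by move=> [a b] /=; rewrite !mmul1r.
Defined.

Definition trivM : finMonoid.
Proof.
refine (@FinMonoid unit (fun _ _ => tt) tt _ _ _).
- by [].
- by case.
- by case.
Defined.

(* A monoid variety (pseudovariety of finite monoids): a class of finite
   monoids closed under submonoids, homomorphic images (quotients) and finite
   direct products (binary products and the empty product). *)
Record variety := Variety {
  vmem :> finMonoid -> Prop;
  v_sub : forall (M N : finMonoid) (f : M -> N),
      is_hom f -> injective f -> vmem N -> vmem M;
  v_quot : forall (M N : finMonoid) (f : M -> N),
      is_hom f -> (forall y, exists x, f x = y) -> vmem M -> vmem N;
  v_prod : forall M N, vmem M -> vmem N -> vmem (prodM M N);
  v_triv : vmem trivM }.

Section Automata.
Variable Sigma : Type.

Record nfa := Nfa {
  nQ : finType;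
  ninit : nQ -> bool;
  nfin : nQ -> bool;
  ntrans : nQ -> Sigma -> nQ -> bool }.

(* [path_ok A p u qs]: qs lists the states visited after p while reading u *)
Fixpoint path_ok (A : nfa) (p : nQ A) (u : seq Sigma) (qs : seq (nQ A)) : Prop :=
  match u, qs with
  | [::], [::] => True
  | a :: u', q :: qs' => ntrans p a q /\ path_ok q u' qs'
  | _, _ => False
  end.

Definition reach (A : nfa) (p : nQ A) (u : seq Sigma) (q : nQ A) : Prop :=
  exists qs, path_ok p u qs /\ last p qs = q.

Definition succ_run (A : nfa) (u : seq Sigma) (r : nQ A * seq (nQ A)) : Prop :=
  ninit r.1 /\ path_ok r.1 u r.2 /\ nfin (last r.1 r.2).

Definition accepts (A : nfa) (u : seq Sigma) : Prop := exists r, @succ_run A u r.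

Definition unambiguous_nfa (A : nfa) : Prop :=
  forall u r1 r2, @succ_run A u r1 -> @succ_run A u r2 -> r1 = r2.

(* u == v in the transition monoid *)
Definition trans_equiv (A : nfa) (u v : seq Sigma) : Prop :=
  forall p q, @reach A p u q <-> @reach A p v q.

(* The transition monoid Sigma^*/== belongs to V, i.e. it is isomorphic to a
   member of V: there is a surjective monoid morphism from (Sigma^*, ++, [::])
   onto some M in V whose kernel is exactly ==. *)
Definition trans_monoid_in (V : variety) (A : nfa) : Prop :=
  exists (M : finMonoid) (phi : seq Sigma -> M),
    V M /\
    phi [::] = mone M /\
    (forall u v, phi (u ++ v) = mmul (phi u) (phi v)) /\
    (forall m, exists u, phi u = m) /\
    (forall u v, phi u = phi v <-> trans_equiv A u v).

Definition V_language (V : variety) (L : seq Sigma -> Prop) : Prop :=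
  exists A : nfa, trans_monoid_in V A /\ forall u, accepts A u <-> L u.

Variable Gamma : Type.

Record nft := Nft {
  tQ : finType;
  tinit : tQ -> option (seq Gamma);   (* Some w : initial with output i(q)=w *)
  tfin : tQ -> option (seq Gamma);    (* Some w : final with output t(q)=w *)
  tdelta : tQ -> Sigma -> tQ -> option (seq Gamma) }.

Definition underlying (T : nft) : nfa :=
  @Nfa (tQ T) (fun q => isSome (tinit q)) (fun q => isSome (tfin q))
       (fun p a q => isSome (tdelta p a q)).

Fixpoint run_out (T : nft) (p : tQ T) (u : seq Sigma) (qs : seq (tQ T)) : seq Gamma :=
  match u, qs with
  | a :: u', q :: qs' => odflt [::] (tdelta p a q) ++ run_out q u' qs'
  | _, _ => [::]
  end.

Definition nft_rel (T : nft) (u : seq Sigma) (w : seq Gamma) : Prop :=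
  exists r : tQ T * seq (tQ T),
    @succ_run (underlying T) u r /\
    w = odflt [::] (tinit r.1) ++ run_out r.1 u r.2
        ++ odflt [::] (tfin (last r.1 r.2)).

Definition defines (T : nft) (f : seq Sigma -> option (seq Gamma)) : Prop :=
  forall u w, nft_rel T u w <-> f u = Some w.

Definition rational (f : seq Sigma -> option (seq Gamma)) : Prop :=
  exists T : nft, defines T f.

Definition unamb_V_definable (V : variety) (f : seq Sigma -> option (seq Gamma)) : Prop :=
  exists T : nft, unambiguous_nfa (underlying T) /\
                  trans_monoid_in V (underlying T) /\ defines T f.

End Automata.

Definition dom (S G : Type) (f : seq S -> option (seq G)) : seq S -> Prop :=
  fun u => f u <> None.

(* completion: output alphabet G + {bot}, with bot encoded as None *)
Definition completion (S G : Type) (f : seq S -> option (seq G))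
  : seq S -> option (seq (option G)) :=
  fun u => Some (match f u with
                 | Some w => map Some w
                 | None => [:: None]
                 end).

(* Main.v *)
Require Import Defs.
From mathcomp Require Import all_boot.
From Stdlib Require Import ClassicalEpsilon.
Set Implicit Arguments. Unset Strict Implicit. Unset Printing Implicit Defensive.

Definition asb (P : Prop) : bool := if excluded_middle_informative P then true else false.
Lemma asbP (P : Prop) : reflect P (asb P).
Proof. rewrite /asb; case: excluded_middle_informative => h; [by left | by right]. Qed.

Definition inimg (S : Type) (C : Type) (psi : seq S -> C) (x : C) : bool :=
  asb (exists u, psi u = x).

Lemma inimg_mul S (C : finMonoid) (psi : seq S -> C)
  (hc : forall u v, psi (u ++ v) = mmul (psi u) (psi v)) x y :
  inimg psi x -> inimg psi y -> inimg psi (mmul x y).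
Proof.
move=> /asbP [u <-] /asbP [v <-]; apply/asbP; exists (u ++ v); exact: hc.
Qed.
Lemma inimg_one S (C : finMonoid) (psi : seq S -> C) (h0 : psi [::] = mone C) :
  inimg psi (mone C).
Proof. apply/asbP; by exists [::]. Qed.

Definition Img S (C : finMonoid) (psi : seq S -> C) (h0 : psi [::] = mone C)
  (hc : forall u v, psi (u ++ v) = mmul (psi u) (psi v)) : finMonoid.
Proof.
refine (@FinMonoid {x : C | inimg psi x}
  (fun x y => exist _ (mmul (val x) (val y)) (inimg_mul hc (valP x) (valP y)))
  (exist _ (mone C) (inimg_one h0)) _ _ _).
- move=> x y z; apply: val_inj => /=; exact: mmulA.
- move=> x; apply: val_inj => /=; exact: mmul1l.
- move=> x; apply: val_inj => /=; exact: mmul1r.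
Defined.

Lemma inimg_u S (C : Type) (psi : seq S -> C) u : inimg psi (psi u).
Proof. apply/asbP; by exists u. Qed.

Definition imgmap S (C : finMonoid) (psi : seq S -> C) (h0 : psi [::] = mone C)
  (hc : forall u v, psi (u ++ v) = mmul (psi u) (psi v)) (u : seq S) : Img h0 hc :=
  exist (fun x => is_true (inimg psi x)) (psi u) (inimg_u psi u).

Definition rcomp (Q : finType) (x y : {ffun Q * Q -> bool}) : {ffun Q * Q -> bool} :=
  [ffun pr => [exists q, x (pr.1, q) && y (q, pr.2)]].
Definition rid (Q : finType) : {ffun Q * Q -> bool} := [ffun pr => pr.1 == pr.2].

Definition RelM (Q : finType) : finMonoid.
Proof.
refine (@FinMonoid {ffun Q * Q -> bool} (@rcomp Q) (rid Q) _ _ _).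
- move=> x y z; apply/ffunP => [[p r]]; rewrite /rcomp !ffunE /=.
  apply/existsP/existsP.
  + move=> [q /andP [hx]]; rewrite ffunE /= => /existsP [q' /andP [hy hz]].
    exists q'; rewrite hz andbT ffunE /=; apply/existsP; exists q; by rewrite hx.
  + move=> [q' /andP []]; rewrite ffunE /= => /existsP [q /andP [hx hy]] hz.
    exists q; rewrite hx ffunE /=; apply/existsP; exists q'; by rewrite hy.
- move=> x; apply/ffunP => [[p r]]; rewrite /rcomp /rid !ffunE /=.
  apply/existsP/idP => [[q]| h]; first by rewrite ffunE /= => /andP [/eqP <-].
  by exists p; rewrite ffunE /= eqxx.
- move=> x; apply/ffunP => [[p r]]; rewrite /rcomp /rid !ffunE /=.
  apply/existsP/idP => [[q]| h]; first by rewrite ffunE /= => /andP [h /eqP <-].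
  by exists r; rewrite ffunE /= eqxx andbT.
Defined.

Lemma reach_nil S (A : nfa S) (p q : nQ A) : reach p [::] q <-> p = q.
Proof.
split=> [[qs [hp hl]] | <-]; last by exists [::].
by case: qs hp hl.
Qed.

Lemma reach_cons S (A : nfa S) (p : nQ A) a u (q : nQ A) :
  reach p (a :: u) q <-> exists p', ntrans p a p' /\ reach p' u q.
Proof.
split=> [[qs [hp hl]] | [p' [ht [qs [hp hl]]]]].
- case: qs hp hl => [//|p' qs [ht hp] hl]; exists p'; split=> //; by exists qs.
- by exists (p' :: qs).
Qed.

Lemma reach_cat S (A : nfa S) (p : nQ A) u v (q : nQ A) :
  reach p (u ++ v) q <-> exists m, reach p u m /\ reach m v q.
Proof.
elim: u p => [|a u IH] p /=.
- split=> [h | [m [/reach_nil -> h]]] //; exists p; split=> //; exact/reach_nil.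
- rewrite reach_cons; split.
  + move=> [p' [ht /IH [m [h1 h2]]]]; exists m; split=> //; apply/reach_cons; by exists p'.
  + move=> [m [/reach_cons [p' [ht h1]] h2]]; exists p'; split=> //; apply/IH; by exists m.
Qed.

Definition rel S (A : nfa S) (u : seq S) : RelM (nQ A) :=
  [ffun pr => asb (reach pr.1 u pr.2)].

Lemma rel_nil S (A : nfa S) : rel A [::] = mone (RelM (nQ A)).
Proof.
apply/ffunP => [[p q]]; rewrite /rel /= /rid !ffunE /=.
apply/asbP/eqP => [/reach_nil // | ->]; exact/reach_nil.
Qed.

Lemma rel_cat S (A : nfa S) u v : rel A (u ++ v) = mmul (rel A u) (rel A v).
Proof.
apply/ffunP => [[p q]]; rewrite /rel /= /rcomp !ffunE /=.
apply/asbP/existsP => [/reach_cat [m [h1 h2]] | [m]].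
- by exists m; rewrite !ffunE /=; apply/andP; split; apply/asbP.
- rewrite !ffunE /= => /andP [/asbP h1 /asbP h2]; apply/reach_cat; by exists m.
Qed.

Lemma rel_eq S (A : nfa S) u v : trans_equiv A u v -> rel A u = rel A v.
Proof.
move=> h; apply/ffunP => [[p q]]; rewrite !ffunE /=.
by apply/asbP/asbP => /h.
Qed.

Lemma rel_eqE S (A : nfa S) u v : rel A u = rel A v -> trans_equiv A u v.
Proof.
move=> h p q; move/ffunP: h => /(_ (p, q)); rewrite !ffunE /= => e.
by split=> h; apply/asbP; [rewrite -e | rewrite e]; apply/asbP.
Qed.
Definition pickw S (C : finMonoid) (psi : seq S -> C) (h0 : psi [::] = mone C)
  (hc : forall u v, psi (u ++ v) = mmul (psi u) (psi v)) (s : Img h0 hc) : seq S :=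
  proj1_sig (constructive_indefinite_description _ (elimT (asbP _) (valP s))).
Lemma pickwP S (C : finMonoid) (psi : seq S -> C) (h0 : psi [::] = mone C)
  (hc : forall u v, psi (u ++ v) = mmul (psi u) (psi v)) (s : Img h0 hc) :
  psi (pickw s) = val s.
Proof. rewrite /pickw; by case: constructive_indefinite_description. Qed.

Lemma transQ S (V : variety) (B : nfa S) (M : finMonoid) (phi : seq S -> M)
  (h0 : phi [::] = mone M) (hc : forall u v, phi (u ++ v) = mmul (phi u) (phi v)) :
  V M -> (forall u v, phi u = phi v -> trans_equiv B u v) -> trans_monoid_in V B.
Proof.
move=> VM hB.
pose SM := Img h0 hc.
have VS : V SM.
  apply: (@v_sub V SM M val) => //; last exact: val_inj; by split.
pose NM := Img (rel_nil B) (@rel_cat S B).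
have VN : V NM.
  pose g (s : SM) : NM := imgmap (rel_nil B) (@rel_cat S B) (pickw s).
  apply: (@v_quot V SM NM g) => //.
  - split.
    + apply: val_inj => /=; transitivity (rel B [::]); last exact: rel_nil.
      apply: rel_eq; apply: hB; rewrite h0; exact: (pickwP (mone SM)).
    + move=> x y; apply: val_inj => /=.
      transitivity (rel B (pickw x ++ pickw y)); last exact: rel_cat.
      apply: rel_eq; apply: hB.
      rewrite hc (pickwP x) (pickwP y); exact: (pickwP (mmul x y)).
  - move=> [y hy]; have [u hu] := elimT (asbP _) hy.
    exists (imgmap h0 hc u); apply: val_inj => /=; rewrite -hu; apply: rel_eq; apply: hB.
    exact: (pickwP (imgmap h0 hc u)).
exists NM, (imgmap (rel_nil B) (@rel_cat S B)); split=> //; split.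
  by apply: val_inj; rewrite /= rel_nil.
split; first by move=> u v; apply: val_inj; rewrite /= rel_cat.
split; first by move=> [y hy]; have [u hu] := elimT (asbP _) hy; exists u; apply: val_inj.
move=> u v; split; first by move=> /(congr1 val) /= /rel_eqE.
by move=> /rel_eq h; apply: val_inj.
Qed.

Lemma transQ2 S (V : variety) (B A1 A2 : nfa S) :
  trans_monoid_in V A1 -> trans_monoid_in V A2 ->
  (forall u v, trans_equiv A1 u v -> trans_equiv A2 u v -> trans_equiv B u v) ->
  trans_monoid_in V B.
Proof.
move=> [M1 [p1 [V1 [n1 [c1 [_ e1]]]]]] [M2 [p2 [V2 [n2 [c2 [_ e2]]]]]] h.
apply: (@transQ S V B (prodM M1 M2) (fun u => (p1 u, p2 u))).
- by rewrite /= n1 n2.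
- by move=> u v; rewrite /= c1 c2.
- exact: v_prod.
- move=> u v [] /e1 h1 /e2 h2; exact: h.
Qed.
Definition dstep S (A : nfa S) (X : {set nQ A}) (a : S) : {set nQ A} :=
  [set q | [exists p in X, ntrans p a q]].
Fixpoint traj S (A : nfa S) (X : {set nQ A}) (u : seq S) : seq {set nQ A} :=
  match u with [::] => [::] | a :: u' => dstep X a :: traj (dstep X a) u' end.
Definition dlast S (A : nfa S) (X : {set nQ A}) u := last X (traj X u).
Definition dinit S (A : nfa S) : {set nQ A} := [set q | ninit q].

Lemma size_traj S (A : nfa S) (X : {set nQ A}) u : size (traj X u) = size u.
Proof. by elim: u X => [|a u IH] X //=; rewrite IH. Qed.

Lemma path_size S (A : nfa S) (p : nQ A) u qs : path_ok p u qs -> size qs = size u.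
Proof.
elim: u p qs => [|a u IH] p [|q qs] //= [_ h]; by rewrite (IH _ _ h).
Qed.

Lemma dlastP S (A : nfa S) (X : {set nQ A}) u q :
  q \in dlast X u <-> exists p, p \in X /\ reach p u q.
Proof.
elim: u X => [|a u IH] X /=.
- rewrite /dlast /=; split => [h|[p [hp /reach_nil <-]]] //; exists q; split=> //; exact/reach_nil.
- rewrite /dlast /= -/(dlast _ _) IH; split.
  + move=> [p']; rewrite inE => [[/existsP [p /andP [hp ht]] hr]].
    exists p; split=> //; apply/reach_cons; by exists p'.
  + move=> [p [hp /reach_cons [p' [ht hr]]]]; exists p'; split=> //.
    rewrite inE; apply/existsP; exists p; by rewrite hp.
Qed.

Lemma dlast_eq S (A : nfa S) (X : {set nQ A}) u v :
  trans_equiv A u v -> dlast X u = dlast X v.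
Proof.
move=> h; apply/setP => q; apply/idP/idP => /dlastP [p [hp hr]]; apply/dlastP;
  exists p; split=> //; by apply/h.
Qed.

Lemma accD S (A : nfa S) u : accepts A u <-> [exists q in dlast (dinit A) u, nfin q].
Proof.
split.
- move=> [[q0 qs] [hi [hp hf]]]; apply/existsP; exists (last q0 qs); rewrite hf andbT.
  apply/dlastP; exists q0; split; [by rewrite inE | by exists qs].
- move=> /existsP [q /andP [/dlastP [p [hp [qs [hq hl]]]] hf]]; exists (p, qs).
  split; first by rewrite inE in hp.
  by split=> //=; rewrite hl.
Qed.
Definition liftO G (o : option (seq G)) : option (seq (option G)) := omap (map Some) o.
Lemma isSome_liftO G (o : option (seq G)) : isSome (liftO o) = isSome o.
Proof. by case: o. Qed.
Lemma odflt_liftO G (o : option (seq G)) : odflt [::] (liftO o) = map Some (odflt [::] o).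
Proof. by case: o. Qed.

Definition T2 S G (T : nft S G) : nft S (option G) :=
  @Nft S (option G) (tQ T + {set tQ T})%type
  (fun x => match x with inl q => liftO (tinit q)
     | inr X => if X == dinit (underlying T) then Some [::] else None end)
  (fun x => match x with inl q => liftO (tfin q)
     | inr X => if [exists q in X, isSome (tfin q)] then None else Some [:: None] end)
  (fun x a y => match x, y with
     | inl p, inl q => liftO (tdelta p a q)
     | inr X, inr Y => if Y == dstep (A := underlying T) X a then Some [::] else None
     | _, _ => None end).

Lemma pathL S G (T : nft S G) u (p : tQ T) qs :
  path_ok (A := underlying (T2 T)) (inl p) u qs <->
  exists qs', qs = map inl qs' /\ path_ok (A := underlying T) p u qs'.
Proof.
elim: u p qs => [|a u IH] p [|y qs] /=.
- by split=> // _; exists [::].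
- split=> [[]|[qs' [e hp]]]; by case: qs' e hp.
- split=> [[]|[qs' [e hp]]]; by case: qs' e hp.
- case: y => [q|Y] /=.
  + rewrite isSome_liftO IH; split.
    * move=> [ht [qs' [-> hp]]]; by exists (q :: qs').
    * move=> [qs1 [e1 hp1]]; case: qs1 e1 hp1 => [//|q1 qs1 /= [<- ->] [ht1 hp1]].
      split=> //; by exists qs1.
  + split=> [[//]|[qs' [e hp]]]; by case: qs' e hp.
Qed.

Lemma pathR S G (T : nft S G) u (X : {set tQ T}) qs :
  path_ok (A := underlying (T2 T)) (inr X) u qs <->
  qs = map inr (traj (A := underlying T) X u).
Proof.
elim: u X qs => [|a u IH] X [|y qs] //=.
case: y => [q|Y] /=; first by split=> [[]|].
rewrite IH; split.
- by move=> [h ->]; move: h; case: eqP => // ->.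
- by move=> [-> ->]; rewrite eqxx; split=> //; apply/IH.
Qed.

Lemma outL S G (T : nft S G) u (p : tQ T) qs :
  run_out (T := T2 T) (inl p) u (map inl qs) = map Some (run_out p u qs).
Proof.
elim: u p qs => [|a u IH] p [|q qs] //=.
by rewrite IH odflt_liftO map_cat.
Qed.

Lemma outR S G (T : nft S G) u (X : {set tQ T}) :
  run_out (T := T2 T) (inr X) u (map inr (traj (A := underlying T) X u)) = [::].
Proof. by elim: u X => [|a u IH] X //=; rewrite eqxx IH. Qed.

Lemma runL S G (T : nft S G) u (p : tQ T) qs :
  succ_run (A := underlying (T2 T)) u (inl p, qs) <->
  exists qs', qs = map inl qs' /\ succ_run (A := underlying T) u (p, qs').
Proof.
rewrite /succ_run /=; split.
- move=> [hi [/pathL [qs' [-> hp]] hf]]; exists qs'; split=> //.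
  move: hi hf; rewrite last_map /= !isSome_liftO => hi hf; by split.
- move=> [qs' [-> [hi [hp hf]]]]; rewrite last_map /= !isSome_liftO; split=> //.
  split=> //; apply/pathL; by exists qs'.
Qed.

Lemma runR S G (T : nft S G) u (X : {set tQ T}) qs :
  succ_run (A := underlying (T2 T)) u (inr X, qs) <->
  [/\ X = dinit (underlying T), qs = map inr (traj (A := underlying T) X u) &
      ~~ [exists q in dlast (A := underlying T) X u, isSome (tfin q)]].
Proof.
rewrite /succ_run /=; split.
- move=> [hi [/pathR -> hf]]; move: hi hf; rewrite last_map /=.
  case: eqP => // -> _; by case: existsP => // /existsP.
- move=> [-> -> hf]; rewrite eqxx last_map /=; split=> //; split; first exact/pathR.
  by rewrite (negbTE hf).
Qed.
Lemma reachL S G (T : nft S G) u (p : tQ T) (y : tQ (T2 T)) :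
  reach (A := underlying (T2 T)) (inl p) u y <->
  exists q, y = inl q /\ reach (A := underlying T) p u q.
Proof.
split.
- move=> [qs [/pathL [qs' [-> hp]] hl]]; rewrite last_map in hl.
  exists (last p qs'); split=> //; by exists qs'.
- move=> [q [-> [qs' [hp hl]]]]; exists (map inl qs'); rewrite last_map hl; split=> //.
  apply/pathL; by exists qs'.
Qed.

Lemma reachR S G (T : nft S G) u (X : {set tQ T}) (y : tQ (T2 T)) :
  reach (A := underlying (T2 T)) (inr X) u y <-> y = inr (dlast (A := underlying T) X u).
Proof.
split.
- by move=> [qs [/pathR -> <-]]; rewrite last_map.
- move=> ->; exists (map inr (traj (A := underlying T) X u)); rewrite last_map.
  split=> //; exact/pathR.
Qed.

Lemma accU S G (T : nft S G) (f : seq S -> option (seq G)) u :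
  defines T f -> (accepts (underlying T) u <-> exists w, f u = Some w).
Proof.
move=> hdef; split.
- move=> [r hr]; eexists; apply/hdef; exists r; split; [exact: hr | reflexivity].
- move=> [w /hdef [r [hr _]]]; by exists r.
Qed.

Lemma dir1 S G (V : variety) (f : seq S -> option (seq G)) :
  unamb_V_definable V f -> unamb_V_definable V (completion f).
Proof.
move=> [T [hun [hV hdef]]].
exists (T2 T); split; [|split].
- move=> u [x1 qs1] [x2 qs2].
  case: x1 => [p1|X1]; case: x2 => [p2|X2].
  + move=> /runL [qs1' [-> h1]] /runL [qs2' [-> h2]].
    by case: (hun _ _ _ h1 h2) => -> ->.
  + move=> /runL [qs1' [_ h1]] /runR [e _ hf].
    have: accepts (underlying T) u by exists (p1, qs1').
    move/accD; rewrite -e => hh; by case/negP: hf.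
  + move=> /runR [e _ hf] /runL [qs1' [_ h1]].
    have: accepts (underlying T) u by exists (p2, qs1').
    move/accD; rewrite -e => hh; by case/negP: hf.
  + by move=> /runR [-> -> _] /runR [-> -> _].
- apply: (transQ2 hV hV) => u v h _ x y; case: x => [p|X].
  + rewrite !reachL; split=> [[q [-> /h hr]] | [q [-> /h hr]]]; by exists q.
  + by rewrite !reachR (dlast_eq _ h).
- move=> u w; rewrite /completion; split.
  + move=> [[x qs] [hr ->]]; case: x hr => [p|X].
    * move=> /runL [qs' [-> hs]].
      have := (hdef u _).1 (ex_intro _ (p, qs') (conj hs erefl)) => /= ->.
      by rewrite outL last_map /= !odflt_liftO !map_cat.
    * move=> /runR [e -> hf]; subst X; case hfu: (f u) => [w'|].
      -- have : accepts (underlying T) u by apply/(accU u hdef); exists w'.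
         move/accD => hh; by case/negP: hf.
      -- by rewrite /= eqxx outR last_map /=; move: hf; rewrite /dlast => /negbTE ->.
  + case hfu: (f u) => [w'|] [<-].
    * have [[p qs'] [hs ->]] := (hdef u w').2 hfu.
      exists (inl p, map inl qs'); split; first by apply/runL; exists qs'.
      by rewrite /= outL last_map /= !odflt_liftO !map_cat.
    * exists (inr (dinit (underlying T)), map inr (traj (A := underlying T) (dinit (underlying T)) u)).
      have hf : ~~ [exists q in dlast (A := underlying T) (dinit (underlying T)) u, isSome (tfin q)].
        apply/negP => /accD /(accU u hdef) [w0]; by rewrite hfu.
      split; first exact/runR.
      by rewrite /= eqxx outR last_map /=; move: hf; rewrite /dlast => /negbTE ->.
Qed.
Definition strip G (s : seq (option G)) : seq G := pmap id s.
Definition stO G (o : option (seq (option G))) : option (seq G) := omap (@strip G) o.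
Lemma isSome_stO G (o : option (seq (option G))) : isSome (stO o) = isSome o.
Proof. by case: o. Qed.
Lemma odflt_stO G (o : option (seq (option G))) : odflt [::] (stO o) = strip (odflt [::] o).
Proof. by case: o. Qed.
Lemma strip_cat G (s t : seq (option G)) : strip (s ++ t) = strip s ++ strip t.
Proof. exact: pmap_cat. Qed.
Lemma strip_map G (w : seq G) : strip (map Some w) = w.
Proof. by elim: w => //= a w ->. Qed.

Definition Pr S G (T : nft S (option G)) (A : nfa S) : nft S G :=
  @Nft S G (tQ T * {set nQ A})%type
   (fun x => if x.2 == dinit A then stO (tinit x.1) else None)
   (fun x => if [exists q in x.2, nfin q] then stO (tfin x.1) else None)
   (fun x a y => if y.2 == dstep x.2 a then stO (tdelta x.1 a y.1) else None).

Lemma pathP S G (T : nft S (option G)) (A : nfa S) u (x : tQ (Pr T A)) qs :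
  path_ok (A := underlying (Pr T A)) x u qs <->
  path_ok (A := underlying T) x.1 u (map fst qs) /\ map snd qs = traj x.2 u.
Proof.
elim: u x qs => [|a u IH] x [|y qs] /=.
- by [].
- by split=> [|[]].
- by split=> [|[]].
- rewrite IH; case: (y.2 =P dstep x.2 a) => [e|ne].
  + rewrite isSome_stO e; split.
    * by move=> [h [h1 ->]].
    * by move=> [[h1 h2] [->]].
  + split=> [[]//|[_ [e _]]]; by case: ne.
Qed.

Lemma outP S G (T : nft S (option G)) (A : nfa S) u (x : tQ (Pr T A)) qs :
  path_ok (A := underlying (Pr T A)) x u qs ->
  run_out (T := Pr T A) x u qs = strip (run_out x.1 u (map fst qs)).
Proof.
elim: u x qs => [|a u IH] x [|y qs] //= [h hp].
rewrite (IH _ _ hp) strip_cat; move: h; case: eqP => // _ _.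
by rewrite odflt_stO.
Qed.

Lemma runP S G (T : nft S (option G)) (A : nfa S) u (x : tQ (Pr T A)) qs :
  succ_run (A := underlying (Pr T A)) u (x, qs) <->
  [/\ x.2 = dinit A, map snd qs = traj (dinit A) u,
      [exists q in dlast (dinit A) u, nfin q] &
      succ_run (A := underlying T) u (x.1, map fst qs)].
Proof.
rewrite /succ_run /=; split.
- move=> [hi [/pathP [hp hs] hf]].
  move: hi; case: eqP => // e hi.
  have hl2 : (last x qs).2 = dlast (dinit A) u by rewrite /dlast -e -hs last_map.
  move: hf; rewrite hl2; case: ifP => // he hf.
  split=> //; first by rewrite -e.
  rewrite isSome_stO in hi; rewrite isSome_stO -last_map in hf; by split.
- move=> [e hs he [hi [hp hf]]].
  have hl2 : (last x qs).2 = dlast (dinit A) u by rewrite /dlast -hs -e last_map.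
  rewrite e eqxx isSome_stO hl2 he isSome_stO -last_map; split=> //; split=> //.
  apply/pathP; by rewrite e.
Qed.

Lemma reachP S G (T : nft S (option G)) (A : nfa S) u (x y : tQ (Pr T A)) :
  reach (A := underlying (Pr T A)) x u y <->
  reach (A := underlying T) x.1 u y.1 /\ y.2 = dlast x.2 u.
Proof.
split.
- move=> [qs [/pathP [hp hs] <-]]; split.
  + exists (map fst qs); by rewrite last_map.
  + by rewrite /dlast -hs last_map.
- move=> [[qs' [hp hl]] e]; exists (zip qs' (traj x.2 u)).
  have hsz : size qs' = size (traj x.2 u) by rewrite size_traj (path_size hp).
  have h1 : map fst (zip qs' (traj x.2 u)) = qs' by apply: unzip1_zip; rewrite hsz.
  have h2 : map snd (zip qs' (traj x.2 u)) = traj x.2 u by apply: unzip2_zip; rewrite hsz.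
  split; first by apply/pathP; rewrite h1 h2.
  set zs := zip qs' (traj x.2 u) in h1 h2 *.
  have e1 : (last x zs).1 = last x.1 (map fst zs) by rewrite last_map.
  have e2 : (last x zs).2 = last x.2 (map snd zs) by rewrite last_map.
  rewrite h1 hl in e1; rewrite h2 -/(dlast _ _) -e in e2.
  move: e1 e2; case: (last x zs) => a b; case: y {hl e} => c d /= -> ->; done.
Qed.
Lemma outRun S G (T : nft S (option G)) (A : nfa S) u (x : tQ (Pr T A)) qs :
  succ_run (A := underlying (Pr T A)) u (x, qs) ->
  odflt [::] (tinit (n := Pr T A) x) ++ run_out (T := Pr T A) x u qs
    ++ odflt [::] (tfin (n := Pr T A) (last x qs)) =
  strip (odflt [::] (tinit x.1) ++ run_out x.1 u (map fst qs)
    ++ odflt [::] (tfin (last x.1 (map fst qs)))).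
Proof.
move=> hsr; have [e hs he hr] := (runP _ _ _).1 hsr.
have hl2 : (last x qs).2 = dlast (dinit A) u by rewrite /dlast -hs -e last_map.
rewrite (outP hsr.2.1) /= e eqxx hl2 he !odflt_stO !strip_cat last_map //.
Qed.

Lemma dir2 S G (V : variety) (f : seq S -> option (seq G)) :
  V_language V (dom f) -> unamb_V_definable V (completion f) -> unamb_V_definable V f.
Proof.
move=> [A [hVA hAcc]] [T [hun [hV hdef]]].
exists (Pr T A); split; [|split].
- move=> u [x1 qs1] [x2 qs2] /runP [e1 s1 _ h1] /runP [e2 s2 _ h2].
  case: (hun _ _ _ h1 h2) => ea eb.
  have -> : qs1 = qs2.
    rewrite -(zip_unzip qs1) -(zip_unzip qs2); congr zip; [exact: eb | by rewrite /unzip2 s1 s2].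
  by move: e1 e2 ea; clear; case: x1 => a1 b1; case: x2 => a2 b2 /= -> -> ->.
- apply: (transQ2 hV hVA) => u v h1 h2 x y; rewrite !reachP (dlast_eq _ h2).
  by split=> [[/h1 hr e]|[/h1 hr e]].
- move=> u w; split.
  + move=> [[x qs] [hsr ->]]; have [e hs he hr] := (runP _ _ _).1 hsr.
    have hd : f u <> None by apply/hAcc/accD.
    case hfu: (f u) hd => [w0|] // _.
    have := (hdef u _).1 (ex_intro _ (x.1, map fst qs) (conj hr erefl)).
    rewrite /completion hfu => -[ew].
    by rewrite (outRun hsr) -ew strip_map.
  + move=> hfu.
    have : completion f u = Some (map Some w) by rewrite /completion hfu.
    move/(hdef u) => [[p qs'] [hr ew]].
    pose zs := zip qs' (traj (dinit A) u).
    have hsz : size qs' = size (traj (dinit A) u) by rewrite size_traj (path_size hr.2.1).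
    have h1 : map fst zs = qs' by apply: unzip1_zip; rewrite hsz.
    have h2 : map snd zs = traj (dinit A) u by apply: unzip2_zip; rewrite hsz.
    have hsr : succ_run (A := underlying (Pr T A)) u ((p, dinit A), zs).
      apply/runP; split=> //=; last by rewrite h1.
      apply/accD/hAcc; by rewrite /dom hfu.
    exists ((p, dinit A), zs); split=> //.
    by rewrite (outRun hsr) /= h1 -ew strip_map.
Qed.

Theorem mainTheorem16 (Sigma : finType) (V : variety)
  (f : seq Sigma -> option (seq Sigma)) :
  rational f ->
  V_language V (dom f) ->
  (unamb_V_definable V f <-> unamb_V_definable V (completion f)).
Proof.
move=> _ hA; split; [exact: dir1 | exact: dir2].
Qed.
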